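(* Let $N\ge 3$. There exists a subset $\mathbb{S}\subset\mathbb{R}_+$ which is dense in $\mathbb{R}_+$ such that for every $M\in\mathbb{S}$ the equation $$V_{ss}+(5-N)V_s s^{-1}+\tfrac12 V_s s^{-3}-V_sVs^{-1}-2(N-2)Vs^{-2}+(N-2)V^2s^{-2}=0$$ admits a local solution $V$ with $V(0)=M$, i.e. there is $L>0$ and $V\in C([0,L])\cap C^2((0,L))$ satisfying the equation on $(0,L)$ with $V(0)=M$.
   Context: $\mathbb{R}_+=(0,\infty)$. This equation arises from the stationary self-similar equation $\phi_{\xi\xi}+(\frac{N+1}{\xi}-\frac{\xi}{2})\phi_\xi-\phi+\phi(\xi\phi_\xi+N\phi)=0$ via $V(s)=\phi(\xi)\xi^2$, $s=1/\xi$. *)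

(* Defs.v *)
From Stdlib Require Import Reals.
From Coquelicot Require Import Coquelicot.
Open Scope R_scope.

Definition ode_lhs (N : nat) (s v v1 v2 : R) : R :=
  v2 + (5 - INR N) * v1 / s + / 2 * v1 / (s ^ 3) - v1 * v / s
  - 2 * (INR N - 2) * v / (s ^ 2) + (INR N - 2) * (v ^ 2) / (s ^ 2).

(* Main.v *)
Require Import Defs.
From Stdlib Require Import Reals Lra Lia.
From Coquelicot Require Import Coquelicot.
Open Scope R_scope.


Lemma cont_eps (f : R -> R) x :
  (forall eps, 0 < eps -> exists d, 0 < d /\ forall y, Rabs (y - x) < d -> Rabs (f y - f x) < eps) ->
  continuous f x.
Proof.
  intros H. apply filterlim_locally. intros eps.
  destruct (H eps (cond_pos eps)) as [d [Hd Hy]].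
  exists (mkposreal d Hd). intros y Hb. apply Hy. exact Hb.
Qed.

Definition Ek (k : nat) (x : R) : R :=
  if Rle_dec x 0 then 0 else exp (- / (4 * x ^ 2)) / x ^ k.

Lemma exp_small h : 0 < h -> exp (- / (4 * h ^ 2)) <= 64 * h ^ 4.
Proof.
  intros Hh. set (y := / (4 * h ^ 2)).
  assert (Hy : 0 < y) by (unfold y; apply Rinv_0_lt_compat; nra).
  assert (E2 : exp y = exp (y/2) * exp (y/2)) by (rewrite <- exp_plus; f_equal; lra).
  assert (E3 : 1 + y/2 < exp (y/2)) by (apply exp_ineq1; lra).
  assert (E4 : y*y/4 < exp y) by nra.
  rewrite exp_Ropp.
  assert (64 * h^4 = / (y*y/4)).
  { unfold y. assert (h <> 0) by lra. field. auto. }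
  rewrite H. apply Rlt_le. apply Rinv_lt_contravar. apply Rmult_lt_0_compat; [nra | apply exp_pos]. exact E4.
Qed.


Lemma Ek_pos k x : 0 < x -> Ek k x = exp (- / (4 * x ^ 2)) / x ^ k.
Proof. intros H; unfold Ek; destruct (Rle_dec x 0); [lra|auto]. Qed.
Lemma Ek_npos k x : x <= 0 -> Ek k x = 0.
Proof. intros H; unfold Ek; destruct (Rle_dec x 0); [auto|lra]. Qed.
Lemma Ek_ge0 k x : 0 <= Ek k x.
Proof.
  unfold Ek; destruct (Rle_dec x 0); [lra|].
  apply Rlt_le, Rdiv_lt_0_compat; [apply exp_pos| apply pow_lt; lra].
Qed.
Lemma E0_pos x : 0 < x -> 0 < Ek 0 x.
Proof. intros H; rewrite Ek_pos; auto. simpl. rewrite Rdiv_1_r. apply exp_pos. Qed.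
Lemma Ek_S k x : 0 < x -> Ek k x = x * Ek (S k) x.
Proof. intros H. rewrite !Ek_pos; auto. simpl. field. split; [apply pow_nonzero|]; lra. Qed.
Lemma dummy : True. Proof. exact I. Qed.
Lemma Ek_bound k x : (k <= 3)%nat -> 0 < x <= 1 -> Ek k x <= 64 * x.
Proof.
  intros Hk Hx. rewrite Ek_pos by lra.
  pose proof (exp_small x (proj1 Hx)).
  assert (x ^ 4 = x ^ (4 - k) * x ^ k) by (rewrite <- pow_add; f_equal; lia).
  assert (0 < x ^ k) by (apply pow_lt; lra).
  assert (x ^ (4 - k) <= x).
  { destruct (4 - k)%nat as [|m] eqn:E; [lia|]. simpl.
    assert (x ^ m <= 1) by (clear -Hx; induction m; simpl; [lra| pose proof (pow_le x m); nra]). pose proof (pow_le x m). nra. }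
  apply Rmult_le_reg_r with (x ^ k); auto.
  unfold Rdiv. rewrite Rmult_assoc, Rinv_l by lra. nra.
Qed.


Lemma Ek_cont k x : (k <= 3)%nat -> continuous (Ek k) x.
Proof.
  intros Hk.
  destruct (Rlt_dec 0 x) as [Hx|Hx].
  - apply continuous_ext_loc with (fun y => exp (- / (4 * y ^ 2)) / y ^ k).
    + exists (mkposreal x Hx). intros y Hy. cbn in Hy. unfold ball in Hy; cbn in Hy.
      unfold AbsRing_ball, abs, minus, plus, opp in Hy; cbn in Hy.
      rewrite Ek_pos; auto. apply Rabs_lt_between in Hy; lra.
    + assert (x^k <> 0) by (apply pow_nonzero; lra). apply (ex_derive_continuous (K:=R_AbsRing) (V:=R_NormedModule)). auto_derive.
      split; [intro; nra | split; [exact H | exact I]].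
  - destruct (Rlt_dec x 0) as [Hx'|Hx'].
    + apply continuous_ext_loc with (fun _ => 0).
      * exists (mkposreal (-x) ltac:(lra)). intros y Hy. cbn in Hy. unfold ball in Hy; cbn in Hy.
        unfold AbsRing_ball, abs, minus, plus, opp in Hy; cbn in Hy.
        rewrite Ek_npos; auto. apply Rabs_lt_between in Hy; lra.
      * apply continuous_const.
    + assert (x = 0) by lra. subst x.
      apply cont_eps. intros eps He. exists (Rmin 1 (eps/64)).
      split. { apply Rmin_pos; lra. }
      intros y Hy. rewrite (Ek_npos k 0) by lra. rewrite Rminus_0_r in *.
      destruct (Rle_dec y 0). { rewrite Ek_npos by auto. rewrite Rabs_R0; lra. }
      rewrite Rabs_pos_eq by apply Ek_ge0.
      assert (Hy1: y <= 1) by (apply Rabs_lt_between in Hy; pose proof (Rmin_l 1 (eps/64)); lra).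
      assert (Hy2: y < eps/64) by (apply Rabs_lt_between in Hy; pose proof (Rmin_r 1 (eps/64)); lra).
      pose proof (Ek_bound k y Hk ltac:(lra)). lra.
Qed.

Lemma E0_derive x : is_derive (Ek 0) x (Ek 3 x / 2).
Proof.
  destruct (Rlt_dec 0 x) as [Hx|Hx].
  - apply is_derive_ext_loc with (fun y => exp (- / (4 * y ^ 2))).
    + exists (mkposreal x Hx). intros y Hy. cbn in Hy. unfold ball in Hy; cbn in Hy.
      unfold AbsRing_ball, abs, minus, plus, opp in Hy; cbn in Hy.
      rewrite Ek_pos. simpl; field. apply Rabs_lt_between in Hy; lra.
    + rewrite (Ek_pos 3 x Hx). auto_derive. { intro; nra. }
      simpl. field. lra.
  - destruct (Rlt_dec x 0) as [Hx'|Hx'].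
    + rewrite (Ek_npos 3 x) by lra.
      apply is_derive_ext_loc with (fun _ => 0).
      * exists (mkposreal (-x) ltac:(lra)). intros y Hy. cbn in Hy. unfold ball in Hy; cbn in Hy.
        unfold AbsRing_ball, abs, minus, plus, opp in Hy; cbn in Hy.
        rewrite Ek_npos; auto. apply Rabs_lt_between in Hy; lra.
      * replace (0/2) with 0 by field. exact (is_derive_const (K:=R_AbsRing) (V:=R_NormedModule) 0 x).
    + assert (x = 0) by lra. subst x.
      rewrite (Ek_npos 3 0) by lra. replace (0/2) with 0 by field.
      apply is_derive_Reals. intros eps He. exists (mkposreal (Rmin 1 (eps/64)) ltac:(apply Rmin_pos; lra)).
      intros h Hh Hd. cbn in Hd. rewrite Rplus_0_l, (Ek_npos 0 0) by lra.
      destruct (Rle_dec h 0). { rewrite Ek_npos by auto. replace ((0 - 0) / h - 0) with 0 by (field; auto). rewrite Rabs_R0; lra. }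
      assert (Hy1: h <= 1) by (apply Rabs_lt_between in Hd; pose proof (Rmin_l 1 (eps/64)); lra).
      assert (Hy2: h < eps/64) by (apply Rabs_lt_between in Hd; pose proof (Rmin_r 1 (eps/64)); lra).
      pose proof (Ek_bound 1 h ltac:(lia) ltac:(lra)).
      rewrite (Ek_S 0 h) by lra. rewrite Rminus_0_r, Rminus_0_r.
      replace (h * Ek 1 h / h) with (Ek 1 h) by (field; lra).
      rewrite Rabs_pos_eq by apply Ek_ge0. lra.
Qed.

Lemma E3_int s : 0 <= s -> is_RInt (Ek 3) 0 s (2 * Ek 0 s).
Proof.
  intros Hs.
  replace (2 * Ek 0 s) with (minus ((fun y => 2 * Ek 0 y) s) ((fun y => 2 * Ek 0 y) 0)).
  2:{ rewrite (Ek_npos 0 0) by lra. cbn. unfold minus, plus, opp; cbn. ring. }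
  apply (is_RInt_derive (V:=R_CompleteNormedModule) (fun y => 2 * Ek 0 y)).
  - intros x _. replace (Ek 3 x) with (2 * (Ek 3 x / 2)) by field.
    apply is_derive_scal. apply E0_derive.
  - intros x _. apply Ek_cont. lia.
Qed.


Lemma RInt_deriv (U : R -> R) x : (forall y, continuous U y) ->
  is_derive (fun r => RInt U 0 r) x (U x).
Proof.
  intros HU.
  apply (is_derive_RInt (V:=R_NormedModule) U (fun r => RInt U 0 r) 0 x).
  - apply filter_forall. intros b. apply (RInt_correct (V:=R_CompleteNormedModule)).
    apply (ex_RInt_continuous (V:=R_CompleteNormedModule)). intros; auto.
  - auto.
Qed.

Lemma ex_RInt_c (U : R -> R) a b : (forall y, continuous U y) -> ex_RInt U a b.
Proof. intros HU. apply (ex_RInt_continuous (V:=R_CompleteNormedModule)). intros; auto. Qed.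

Definition clamp (L x : R) := Rmin L (Rmax 0 x).
Definition Vof (M : R) (U : R -> R) (r : R) := M + RInt U 0 r.
Definition fN (nN v : R) := (nN - 2) * v * (2 - v).
Definition Fof (nN M : R) (U : R -> R) (r : R) :=
  Ek 2 r * fN nN (Vof M U r) + Ek 1 r * ((nN - 5 + Vof M U r) * U r).
Definition Phi (nN M : R) (U : R -> R) (s : R) := RInt (Fof nN M U) 0 s / Ek 0 s.
Definition T (nN M L : R) (U : R -> R) (x : R) := Phi nN M U (clamp L x).
Definition Good (U : R -> R) := (forall x, continuous U x) /\ (forall x, Rabs (U x) <= 1).

Lemma Vof_deriv M U x : (forall y, continuous U y) -> is_derive (Vof M U) x (U x).
Proof.
  intros HU. unfold Vof.
  replace (U x) with (0 + U x) by ring.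
  apply (is_derive_plus (K:=R_AbsRing) (V:=R_NormedModule) (fun _ => M) (fun r => RInt U 0 r)).
  - exact (is_derive_const (K:=R_AbsRing) (V:=R_NormedModule) M x).
  - apply RInt_deriv; auto.
Qed.

Lemma Vof_cont M U x : (forall y, continuous U y) -> continuous (Vof M U) x.
Proof.
  intros HU. apply (ex_derive_continuous (K:=R_AbsRing) (V:=R_NormedModule)).
  eexists. apply Vof_deriv; auto.
Qed.

Lemma Vof_bound M U r : Good U -> 0 <= r -> Rabs (Vof M U r - M) <= r.
Proof.
  intros [HU HB] Hr. unfold Vof. assert (E: forall a b : R, a + b - a = b) by (intros; ring). rewrite E.
  replace r with ((r - 0) * 1) at 2 by ring.
  apply abs_RInt_le_const; auto. apply ex_RInt_c; auto.
Qed.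

Lemma Vof_diff M U1 U2 r d : Good U1 -> Good U2 -> (forall x, Rabs (U1 x - U2 x) <= d) -> 0 <= r ->
  Rabs (Vof M U1 r - Vof M U2 r) <= r * d.
Proof.
  intros [HU1 _] [HU2 _] Hd Hr. unfold Vof.
  replace (M + RInt U1 0 r - (M + RInt U2 0 r)) with (RInt (fun x => U1 x - U2 x) 0 r).
  - replace r with (r - 0) at 2 by ring. apply abs_RInt_le_const; auto.
    apply (ex_RInt_minus (V:=R_NormedModule)); apply ex_RInt_c; auto.
  - rewrite (RInt_minus (V:=R_CompleteNormedModule) U1 U2); try apply ex_RInt_c; auto.
    cbn. unfold minus, plus, opp; cbn. ring.
Qed.

Lemma Fof_cont nN M U x : Good U -> continuous (Fof nN M U) x.
Proof.
  intros [HU _]. unfold Fof, fN.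
  pose proof (Vof_cont M U x HU) as HV.
  pose proof (Ek_cont 2 x ltac:(lia)) as H2.
  pose proof (Ek_cont 1 x ltac:(lia)) as H1.
  apply (continuous_plus (K:=R_AbsRing) (V:=R_NormedModule)
    (fun r => Ek 2 r * ((nN - 2) * Vof M U r * (2 - Vof M U r)))
    (fun r => Ek 1 r * ((nN - 5 + Vof M U r) * U r))).
  - apply (continuous_mult (K:=R_AbsRing) (Ek 2)); auto.
    apply (continuous_mult (K:=R_AbsRing) (fun r => (nN - 2) * Vof M U r)).
    + apply (continuous_mult (K:=R_AbsRing) (fun _ => nN - 2)); auto. apply continuous_const.
    + apply (continuous_minus (K:=R_AbsRing) (V:=R_NormedModule) (fun _ => 2)); auto. apply continuous_const.
  - apply (continuous_mult (K:=R_AbsRing) (Ek 1)); auto.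
    apply (continuous_mult (K:=R_AbsRing) (fun r => nN - 5 + Vof M U r)); auto.
    apply (continuous_plus (K:=R_AbsRing) (V:=R_NormedModule) (fun _ => nN - 5)); auto. apply continuous_const.
Qed.

Lemma int_bound (f : R -> R) c s : (forall y, continuous f y) -> 0 <= s ->
  (forall r, 0 <= r <= s -> Rabs (f r) <= c * Ek 3 r) ->
  Rabs (RInt f 0 s) <= 2 * c * Ek 0 s.
Proof.
  intros Hf Hs Hb.
  assert (Hg : is_RInt (fun r => c * Ek 3 r) 0 s (c * (2 * Ek 0 s))).
  { apply (is_RInt_scal (V:=R_NormedModule) (Ek 3) 0 s c). apply E3_int; auto. }
  assert (Hgi : ex_RInt (fun r => c * Ek 3 r) 0 s) by (eexists; eauto).
  assert (RInt (fun r => c * Ek 3 r) 0 s = c * (2 * Ek 0 s)) by (apply is_RInt_unique; auto).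
  assert (Hfi : ex_RInt f 0 s) by (apply ex_RInt_c; auto).
  apply Rabs_le. split.
  - assert (RInt (fun r => - f r) 0 s <= RInt (fun r => c * Ek 3 r) 0 s).
    { apply RInt_le; auto. apply (ex_RInt_opp (V:=R_NormedModule)); auto.
      intros x Hx. specialize (Hb x ltac:(lra)). apply Rabs_le_between in Hb. lra. }
    rewrite (RInt_opp (V:=R_CompleteNormedModule)) in H0 by auto. rewrite H in H0. change (opp (RInt f 0 s)) with (- RInt f 0 s) in H0. lra.
  - assert (RInt f 0 s <= RInt (fun r => c * Ek 3 r) 0 s).
    { apply RInt_le; auto.
      intros x Hx. specialize (Hb x ltac:(lra)). apply Rabs_le_between in Hb. lra. }
    rewrite H in H0. lra.
Qed.


Definition Kc (M : R) := M + 1.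
Definition F0 nN M := (nN - 2) * Kc M * (Kc M + 2).
Definition Ac nN M := Rabs (nN - 5) + Kc M.
Definition Lf nN M := (nN - 2) * (2 + 2 * Kc M).
Definition Cst nN M := F0 nN M + Lf nN M + Ac nN M + 1.
Definition Params nN M L := 3 <= nN /\ 0 < M /\ 0 < L /\ L <= 1 /\ 4 * Cst nN M * L <= 1.

Lemma consts_pos nN M : 3 <= nN -> 0 < M -> 0 <= F0 nN M /\ 0 <= Lf nN M /\ 0 <= Ac nN M.
Proof.
  intros H1 H2. unfold F0, Lf, Ac, Kc. pose proof (Rabs_pos (nN - 5)).
  repeat split; try apply Rmult_le_pos; try apply Rmult_le_pos; nra.
Qed.

Lemma fN_bound nN M v : 3 <= nN -> 0 < M -> Rabs v <= Kc M -> Rabs (fN nN v) <= F0 nN M.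
Proof.
  intros H1 H2 Hv. unfold fN, F0. rewrite !Rabs_mult.
  rewrite (Rabs_pos_eq (nN - 2)) by lra.
  assert (Rabs (2 - v) <= Kc M + 2).
  { pose proof (Rabs_triang 2 (- v)). rewrite Rabs_Ropp in H. rewrite (Rabs_pos_eq 2) in H by lra.
    replace (2 - v) with (2 + - v) by ring. lra. }
  apply Rmult_le_compat; try apply Rabs_pos; try apply Rmult_le_pos; try apply Rabs_pos; try lra.
  apply Rmult_le_compat_l; lra.
Qed.

Lemma fN_lip nN M v1 v2 : 3 <= nN -> 0 < M -> Rabs v1 <= Kc M -> Rabs v2 <= Kc M ->
  Rabs (fN nN v1 - fN nN v2) <= Lf nN M * Rabs (v1 - v2).
Proof.
  intros H1 H2 Hv1 Hv2. unfold fN, Lf.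
  replace ((nN - 2) * v1 * (2 - v1) - (nN - 2) * v2 * (2 - v2)) with
    ((nN - 2) * (2 - v1 - v2) * (v1 - v2)) by ring.
  rewrite !Rabs_mult. rewrite (Rabs_pos_eq (nN - 2)) by lra.
  apply Rmult_le_compat_r; [apply Rabs_pos|]. apply Rmult_le_compat_l; [lra|].
  replace (2 - v1 - v2) with (2 + (- v1 + - v2)) by ring.
  pose proof (Rabs_triang 2 (- v1 + - v2)). pose proof (Rabs_triang (- v1) (- v2)).
  rewrite !Rabs_Ropp in H0. rewrite (Rabs_pos_eq 2) in H by lra. lra.
Qed.

Lemma Vof_K nN M L U r : Params nN M L -> Good U -> 0 <= r <= L -> Rabs (Vof M U r) <= Kc M.
Proof.
  intros (H1 & H2 & H3 & H4 & H5) HU Hr. pose proof (Vof_bound M U r HU (proj1 Hr)).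
  unfold Kc. replace (Vof M U r) with (M + (Vof M U r - M)) by ring.
  pose proof (Rabs_triang M (Vof M U r - M)). rewrite (Rabs_pos_eq M) in H0 by lra. lra.
Qed.

Lemma Fof_bound nN M L U r s : Params nN M L -> Good U -> 0 <= r <= s -> s <= L ->
  Rabs (Fof nN M U r) <= (s * (F0 nN M + Ac nN M)) * Ek 3 r.
Proof.
  intros P HU Hr Hs. pose proof P as (H1 & H2 & H3 & H4 & H5).
  pose proof (consts_pos nN M H1 H2) as (C1 & C2 & C3).
  pose proof (Ek_ge0 3 r) as E3.
  destruct (Rle_dec r 0).
  - unfold Fof. rewrite !Ek_npos by auto. rewrite Rmult_0_l, Rmult_0_l, Rplus_0_r, Rabs_R0.
    lra.
  - assert (Hr0 : 0 < r) by lra.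
    unfold Fof. rewrite (Ek_S 2 r), (Ek_S 1 r), (Ek_S 2 r) by auto.
    pose proof (Vof_K nN M L U r P HU ltac:(lra)) as HV.
    pose proof (fN_bound nN M _ H1 H2 HV) as Hf.
    assert (HA : Rabs (nN - 5 + Vof M U r) <= Ac nN M).
    { unfold Ac. pose proof (Rabs_triang (nN - 5) (Vof M U r)). lra. }
    destruct HU as [_ HB]. specialize (HB r).
    set (e := Ek 3 r) in *. set (v := Vof M U r) in *.
    pose proof (Rabs_triang (r * e * fN nN v) (r * (r * e) * ((nN - 5 + v) * U r))).
    assert (Rabs (r * e * fN nN v) <= r * e * F0 nN M).
    { rewrite Rabs_mult, (Rabs_pos_eq (r * e)) by nra. apply Rmult_le_compat_l; nra. }
    assert (Rabs (r * (r * e) * ((nN - 5 + v) * U r)) <= r * r * e * Ac nN M).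
    { rewrite Rabs_mult, (Rabs_pos_eq (r * (r * e))) by nra. rewrite Rabs_mult.
      replace (r * r * e * Ac nN M) with ((r * (r * e)) * (Ac nN M * 1)) by ring.
      apply Rmult_le_compat_l; [nra|]. apply Rmult_le_compat; auto; apply Rabs_pos. }
    assert (r * r <= s) by nra.
    assert (r * e * F0 nN M <= s * e * F0 nN M) by (apply Rmult_le_compat_r; auto; nra).
    assert (r * r * e * Ac nN M <= s * e * Ac nN M) by (apply Rmult_le_compat_r; auto; nra).
    nra.
Qed.

Lemma Phi_small nN M L U s : Params nN M L -> Good U -> 0 < s <= L ->
  Rabs (Phi nN M U s) <= 2 * s * (F0 nN M + Ac nN M).
Proof.
  intros P HU Hs. unfold Phi.
  pose proof (E0_pos s (proj1 Hs)).
  pose proof (int_bound (Fof nN M U) (s * (F0 nN M + Ac nN M)) s (fun y => Fof_cont nN M U y HU)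
    ltac:(lra) (fun r Hr => Fof_bound nN M L U r s P HU Hr (proj2 Hs))).
  unfold Rdiv. rewrite Rabs_mult, (Rabs_pos_eq (/ _)) by (apply Rlt_le, Rinv_0_lt_compat; auto).
  apply Rmult_le_reg_r with (Ek 0 s); auto. rewrite Rmult_assoc, Rinv_l by lra. lra.
Qed.

Lemma Fof_diff nN M L U1 U2 d r : Params nN M L -> Good U1 -> Good U2 ->
  (forall x, Rabs (U1 x - U2 x) <= d) -> 0 <= r <= L ->
  Rabs (Fof nN M U1 r - Fof nN M U2 r) <= (d * (L * Cst nN M)) * Ek 3 r.
Proof.
  intros P HU1 HU2 Hd Hr. pose proof P as (H1 & H2 & H3 & H4 & H5).
  pose proof (consts_pos nN M H1 H2) as (C1 & C2 & C3).
  pose proof (Ek_ge0 3 r) as E3.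
  assert (Hd0 : 0 <= d) by (specialize (Hd 0); pose proof (Rabs_pos (U1 0 - U2 0)); lra).
  assert (0 <= Cst nN M) by (unfold Cst; lra).
  destruct (Rle_dec r 0).
  - unfold Fof. rewrite !Ek_npos by auto. rewrite !Rmult_0_l, !Rplus_0_r, Rminus_0_r, Rabs_R0.
    lra.
  - assert (Hr0 : 0 < r) by lra.
    unfold Fof. rewrite (Ek_S 2 r), (Ek_S 1 r), (Ek_S 2 r) by auto.
    pose proof (Vof_K nN M L U1 r P HU1 ltac:(lra)) as HV1.
    pose proof (Vof_K nN M L U2 r P HU2 ltac:(lra)) as HV2.
    pose proof (Vof_diff M U1 U2 r d HU1 HU2 Hd ltac:(lra)) as HVd.
    pose proof (fN_lip nN M _ _ H1 H2 HV1 HV2) as Hf.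
    assert (HA : Rabs (nN - 5 + Vof M U1 r) <= Ac nN M).
    { unfold Ac. pose proof (Rabs_triang (nN - 5) (Vof M U1 r)). lra. }
    pose proof (Hd r) as Hdr.
    destruct HU2 as [_ HB]. specialize (HB r).
    set (e := Ek 3 r) in *. set (v1 := Vof M U1 r) in *. set (v2 := Vof M U2 r) in *.
    replace (r * e * fN nN v1 + r * (r * e) * ((nN - 5 + v1) * U1 r) -
      (r * e * fN nN v2 + r * (r * e) * ((nN - 5 + v2) * U2 r))) with
      (r * e * (fN nN v1 - fN nN v2) + r * (r * e) * ((nN - 5 + v1) * (U1 r - U2 r) + (v1 - v2) * U2 r)) by ring.
    pose proof (Rabs_triang (r * e * (fN nN v1 - fN nN v2)) (r * (r * e) * ((nN - 5 + v1) * (U1 r - U2 r) + (v1 - v2) * U2 r))).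
    assert (Q1 : Rabs (r * e * (fN nN v1 - fN nN v2)) <= r * e * (Lf nN M * (r * d))).
    { rewrite Rabs_mult, (Rabs_pos_eq (r * e)) by nra. apply Rmult_le_compat_l; [nra|].
      eapply Rle_trans; [exact Hf|]. apply Rmult_le_compat_l; lra. }
    assert (Q2 : Rabs ((nN - 5 + v1) * (U1 r - U2 r) + (v1 - v2) * U2 r) <= Ac nN M * d + r * d).
    { eapply Rle_trans; [apply Rabs_triang|]. rewrite !Rabs_mult.
      apply Rplus_le_compat.
      - apply Rmult_le_compat; auto; apply Rabs_pos.
      - replace (r * d) with ((r * d) * 1) by ring. apply Rmult_le_compat; auto; apply Rabs_pos. }
    assert (Q3 : Rabs (r * (r * e) * ((nN - 5 + v1) * (U1 r - U2 r) + (v1 - v2) * U2 r)) <= r * (r * e) * (Ac nN M * d + r * d)).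
    { rewrite Rabs_mult, (Rabs_pos_eq (r * (r * e))) by nra. apply Rmult_le_compat_l; [nra|auto]. }
    assert (r * r <= L) by nra. assert (r * r * r <= L) by nra.
    assert (e * d * (r * r * Lf nN M) <= e * d * (L * Lf nN M)) by (apply Rmult_le_compat_l; nra).
    assert (e * d * (r * r * Ac nN M) <= e * d * (L * Ac nN M)) by (apply Rmult_le_compat_l; nra).
    assert (e * d * (r * r * r) <= e * d * L) by (apply Rmult_le_compat_l; nra).
    assert (e * d * (L * Cst nN M) = e * d * (L * F0 nN M) + e * d * (L * Lf nN M) + e * d * (L * Ac nN M) + e * d * L) by (unfold Cst; ring).
    assert (0 <= e * d * (L * F0 nN M)) by (apply Rmult_le_pos; nra).
    nra.
Qed.


Lemma Phi_contr nN M L U1 U2 d s : Params nN M L -> Good U1 -> Good U2 ->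
  (forall x, Rabs (U1 x - U2 x) <= d) -> 0 < s <= L ->
  Rabs (Phi nN M U1 s - Phi nN M U2 s) <= d / 2.
Proof.
  intros P HU1 HU2 Hd Hs. pose proof P as (H1 & H2 & H3 & H4 & H5).
  assert (Hd0 : 0 <= d) by (specialize (Hd 0); pose proof (Rabs_pos (U1 0 - U2 0)); lra).
  pose proof (E0_pos s (proj1 Hs)).
  unfold Phi.
  assert (Ei : RInt (Fof nN M U1) 0 s - RInt (Fof nN M U2) 0 s =
     RInt (fun r => Fof nN M U1 r - Fof nN M U2 r) 0 s).
  { rewrite (RInt_minus (V:=R_CompleteNormedModule) (Fof nN M U1) (Fof nN M U2));
      try (apply ex_RInt_c; intros; apply Fof_cont; auto). reflexivity. }
  replace (RInt (Fof nN M U1) 0 s / Ek 0 s - RInt (Fof nN M U2) 0 s / Ek 0 s)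
    with ((RInt (Fof nN M U1) 0 s - RInt (Fof nN M U2) 0 s) / Ek 0 s) by (field; lra).
  rewrite Ei.
  pose proof (int_bound (fun r => Fof nN M U1 r - Fof nN M U2 r) (d * (L * Cst nN M)) s).
  assert (Hb : Rabs (RInt (fun r => Fof nN M U1 r - Fof nN M U2 r) 0 s) <= 2 * (d * (L * Cst nN M)) * Ek 0 s).
  { apply H0.
    - intros y. apply (continuous_minus (K:=R_AbsRing) (V:=R_NormedModule) (Fof nN M U1) (Fof nN M U2));
      apply Fof_cont; auto.
    - lra.
    - intros r Hr. apply (Fof_diff nN M L); auto; lra. }
  unfold Rdiv. rewrite Rabs_mult, (Rabs_pos_eq (/ _)) by (apply Rlt_le, Rinv_0_lt_compat; auto).
  apply Rmult_le_reg_r with (Ek 0 s); auto. rewrite Rmult_assoc, Rinv_l by lra.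
  assert (2 * (d * (L * Cst nN M)) <= d / 2) by nra. nra.
Qed.

Lemma Phi_nonpos nN M U s : s <= 0 -> Phi nN M U s = 0.
Proof.
  intros Hs. unfold Phi.
  rewrite (RInt_ext (V:=R_CompleteNormedModule) (Fof nN M U) (fun _ => 0)).
  - rewrite RInt_const. cbn. unfold scal; cbn. unfold mult; cbn. unfold Rdiv. ring.
  - intros x Hx. rewrite Rmin_right, Rmax_left in Hx by lra. unfold Fof.
    rewrite !Ek_npos by lra. rewrite !Rmult_0_l. apply Rplus_0_r.
Qed.

Lemma Phi_cont nN M L U s : Params nN M L -> Good U -> 0 <= s -> continuous (Phi nN M U) s.
Proof.
  intros P HU Hs. pose proof P as (H1 & H2 & H3 & H4 & H5).
  pose proof (consts_pos nN M H1 H2) as (C1 & C2 & C3).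
  destruct (Rlt_dec 0 s) as [Hp|Hp].
  - unfold Phi.
    apply (continuous_mult (K:=R_AbsRing) (fun x => RInt (Fof nN M U) 0 x) (fun x => / Ek 0 x)).
    + apply (ex_derive_continuous (K:=R_AbsRing) (V:=R_NormedModule)). eexists.
      apply RInt_deriv. intros; apply Fof_cont; auto.
    + apply (continuous_comp (Ek 0) Rinv).
      * apply Ek_cont; lia.
      * apply continuous_Rinv. pose proof (E0_pos s Hp). lra.
  - assert (s = 0) by lra. subst s.
    apply cont_eps. intros eps He.
    set (Q := 2 * (F0 nN M + Ac nN M) + 1).
    assert (HQ : 0 < Q) by (unfold Q; lra).
    exists (Rmin L (eps / Q)). split. { apply Rmin_pos; [lra| apply Rdiv_lt_0_compat; lra]. }
    intros y Hy. rewrite (Phi_nonpos nN M U 0) by lra. rewrite Rminus_0_r in *.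
    destruct (Rle_dec y 0). { rewrite Phi_nonpos by auto. rewrite Rabs_R0; lra. }
    idtac.
    assert (Hy1: y <= L) by (apply Rabs_lt_between in Hy; pose proof (Rmin_l L (eps/Q)); lra).
    assert (Hy2: y < eps/Q) by (apply Rabs_lt_between in Hy; pose proof (Rmin_r L (eps/Q)); lra).
    pose proof (Phi_small nN M L U y P HU ltac:(lra)).
    assert (y * Q < eps) by (apply Rmult_lt_reg_r with (/ Q); [apply Rinv_0_lt_compat; lra|];
      rewrite Rmult_assoc, Rinv_r by lra; lra).
    unfold Q in *. nra.
Qed.

Lemma clamp_range L x : 0 < L -> 0 <= clamp L x <= L.
Proof. intros; unfold clamp, Rmin, Rmax; repeat destruct Rle_dec; lra. Qed.
Lemma clamp_id L x : 0 <= x <= L -> clamp L x = x.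
Proof. intros; unfold clamp, Rmin, Rmax; repeat destruct Rle_dec; lra. Qed.
Lemma clamp_lip L x y : 0 < L -> Rabs (clamp L y - clamp L x) <= Rabs (y - x).
Proof.
  intros; unfold clamp, Rmin, Rmax; repeat destruct Rle_dec;
  repeat (try rewrite Rminus_diag; try rewrite Rabs_R0); try (apply Rabs_pos);
  unfold Rabs; repeat destruct Rcase_abs; lra.
Qed.
Lemma clamp_cont L x : 0 < L -> continuous (clamp L) x.
Proof.
  intros HL. apply cont_eps. intros eps He. exists eps. split; auto.
  intros y Hy. pose proof (clamp_lip L x y HL). lra.
Qed.

Lemma T_good nN M L U : Params nN M L -> Good U -> Good (T nN M L U).
Proof.
  intros P HU. pose proof P as (H1 & H2 & H3 & H4 & H5).
  pose proof (consts_pos nN M H1 H2) as (C1 & C2 & C3).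
  split.
  - intros x. unfold T. apply (continuous_comp (clamp L) (Phi nN M U)).
    + apply clamp_cont; auto.
    + apply (Phi_cont nN M L); auto. apply clamp_range; auto.
  - intros x. unfold T. pose proof (clamp_range L x H3).
    destruct (Rle_dec (clamp L x) 0).
    + rewrite Phi_nonpos by auto. rewrite Rabs_R0; lra.
    + pose proof (Phi_small nN M L U (clamp L x) P HU ltac:(lra)).
      assert (Cst nN M * L <= 1/4) by lra. unfold Cst in H0.
      assert (clamp L x * (F0 nN M + Ac nN M) <= L * (F0 nN M + Ac nN M)) by (apply Rmult_le_compat_r; lra).
      assert (0 <= L * (Lf nN M + 1)) by (apply Rmult_le_pos; lra). assert (L * (F0 nN M + Ac nN M) <= 1/4) by (unfold Cst in H6; nra). lra.
Qed.

Lemma T_contr nN M L U1 U2 d : Params nN M L -> Good U1 -> Good U2 ->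
  (forall x, Rabs (U1 x - U2 x) <= d) -> forall x, Rabs (T nN M L U1 x - T nN M L U2 x) <= d / 2.
Proof.
  intros P HU1 HU2 Hd x. pose proof P as (H1 & H2 & H3 & H4 & H5).
  assert (Hd0 : 0 <= d) by (specialize (Hd 0); pose proof (Rabs_pos (U1 0 - U2 0)); lra).
  unfold T. pose proof (clamp_range L x H3).
  destruct (Rle_dec (clamp L x) 0).
  - rewrite !Phi_nonpos by auto. rewrite Rminus_0_r, Rabs_R0; lra.
  - apply (Phi_contr nN M L); auto. lra.
Qed.


Lemma half_pow_pos n : 0 < (1/2) ^ n.
Proof. apply pow_lt; lra. Qed.
Lemma half_pow_mono m n : (m <= n)%nat -> (1/2) ^ n <= (1/2) ^ m.
Proof.
  intros H. replace n with (m + (n - m))%nat by lia. rewrite pow_add.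
  pose proof (half_pow_pos m).
  assert ((1/2) ^ (n - m) <= 1).
  { induction (n - m)%nat; simpl; [lra|]. pose proof (half_pow_pos n0). lra. }
  nra.
Qed.

Lemma lim_le a b c : (forall n, a <= b + c * (1/2) ^ n) -> a <= b.
Proof.
  intros H. destruct (Rle_dec a b) as [|Hn]; auto. exfalso.
  destruct (Rle_dec c 0).
  - specialize (H 0%nat). simpl in H. lra.
  - destruct (pow_lt_1_zero (1/2) ltac:(rewrite Rabs_pos_eq; lra) ((a - b) / c) ltac:(apply Rdiv_lt_0_compat; lra)) as [N HN].
    specialize (HN N (le_n N)). specialize (H N). rewrite Rabs_pos_eq in HN by (apply Rlt_le, half_pow_pos).
    apply Rmult_lt_compat_l with (r := c) in HN; [|lra].
    replace (c * ((a - b) / c)) with (a - b) in HN by (field; lra). lra.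
Qed.

Lemma cont_eps_inv (f : R -> R) x : continuous f x ->
  forall eps, 0 < eps -> exists d, 0 < d /\ forall y, Rabs (y - x) < d -> Rabs (f y - f x) < eps.
Proof.
  intros Hc eps He. apply filterlim_locally with (eps := mkposreal eps He) in Hc.
  destruct Hc as [d Hd]. exists d. split; [apply cond_pos|]. intros y Hy. apply (Hd y Hy).
Qed.

Definition Uit nN M L (n : nat) : R -> R :=
  nat_rect (fun _ => R -> R) (fun _ => 0) (fun _ U => T nN M L U) n.

Lemma Uit_good nN M L n : Params nN M L -> Good (Uit nN M L n).
Proof.
  intros P. induction n; simpl.
  - split; intros x. apply continuous_const. rewrite Rabs_R0; lra.
  - apply T_good; auto.
Qed.

Lemma Uit_step nN M L n : Params nN M L -> forall x, Rabs (Uit nN M L (S n) x - Uit nN M L n x) <= 2 * (1/2) ^ n.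
Proof.
  intros P. induction n; intros x.
  - simpl. destruct (Uit_good nN M L 1 P) as [_ HB]. specialize (HB x). simpl in HB.
    rewrite Rminus_0_r. lra.
  - change (Uit nN M L (S (S n))) with (T nN M L (Uit nN M L (S n))).
    change (Uit nN M L (S n)) with (T nN M L (Uit nN M L n)) at 2.
    eapply Rle_trans. apply (T_contr nN M L); auto; apply Uit_good; auto.
    simpl. lra.
Qed.

Lemma Uit_cauchy nN M L n k x : Params nN M L ->
  Rabs (Uit nN M L (n + k) x - Uit nN M L n x) <= 4 * (1/2) ^ n - 4 * (1/2) ^ (n + k).
Proof.
  intros P. induction k.
  - rewrite Nat.add_0_r, Rminus_diag, Rabs_R0. lra.
  - replace (n + S k)%nat with (S (n + k)) by lia.
    pose proof (Uit_step nN M L (n + k) P x).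
    replace (Uit nN M L (S (n + k)) x - Uit nN M L n x) with
      ((Uit nN M L (S (n + k)) x - Uit nN M L (n + k) x) + (Uit nN M L (n + k) x - Uit nN M L n x)) by ring.
    eapply Rle_trans; [apply Rabs_triang|]. change ((1/2)^(S (n+k))) with (1/2 * (1/2)^(n+k)). lra.
Qed.

Lemma Uit_cauchy' nN M L n m x : Params nN M L -> (n <= m)%nat ->
  Rabs (Uit nN M L m x - Uit nN M L n x) <= 4 * (1/2) ^ n.
Proof.
  intros P H. replace m with (n + (m - n))%nat by lia.
  pose proof (Uit_cauchy nN M L n (m - n) x P). pose proof (half_pow_pos (n + (m - n))). lra.
Qed.

Definition Ulim nN M L (x : R) := real (Lim_seq (fun n => Uit nN M L n x)).

Lemma Ulim_is nN M L x : Params nN M L -> is_lim_seq (fun n => Uit nN M L n x) (Ulim nN M L x).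
Proof.
  intros P. unfold Ulim.
  assert (ex_finite_lim_seq (fun n => Uit nN M L n x)).
  { apply ex_lim_seq_cauchy_corr. intros eps.
    destruct (pow_lt_1_zero (1/2) ltac:(rewrite Rabs_pos_eq; lra) (eps / 4) ltac:(pose proof (cond_pos eps); lra)) as [N HN].
    exists N. intros n m Hn Hm. specialize (HN N (le_n N)).
    rewrite Rabs_pos_eq in HN by (apply Rlt_le, half_pow_pos).
    destruct (Nat.le_ge_cases n m).
    - pose proof (Uit_cauchy' nN M L n m x P H). pose proof (half_pow_mono N n Hn).
      rewrite Rabs_minus_sym. lra.
    - pose proof (Uit_cauchy' nN M L m n x P H). pose proof (half_pow_mono N m Hm). lra. }
  destruct H as [l Hl]. rewrite (is_lim_seq_unique _ _ Hl). simpl. exact Hl.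
Qed.

Lemma Ulim_close nN M L n x : Params nN M L -> Rabs (Ulim nN M L x - Uit nN M L n x) <= 4 * (1/2) ^ n.
Proof.
  intros P.
  pose proof (Ulim_is nN M L x P) as Hl.
  apply (is_lim_seq_incr_n _ n) in Hl.
  pose proof (is_lim_seq_minus' _ _ _ _ Hl (is_lim_seq_const (Uit nN M L n x))) as H2.
  apply is_lim_seq_abs in H2.
  pose proof (is_lim_seq_le _ _ _ _ (fun k => Uit_cauchy' nN M L n (k + n) x P ltac:(lia)) H2 (is_lim_seq_const (4 * (1/2)^n))).
  simpl in H. exact H.
Qed.

Lemma Ulim_good nN M L : Params nN M L -> Good (Ulim nN M L).
Proof.
  intros P. split.
  - intros x. apply cont_eps. intros eps He.
    destruct (pow_lt_1_zero (1/2) ltac:(rewrite Rabs_pos_eq; lra) (eps / 12) ltac:(lra)) as [N HN].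
    specialize (HN N (le_n N)). rewrite Rabs_pos_eq in HN by (apply Rlt_le, half_pow_pos).
    destruct (Uit_good nN M L N P) as [HC _].
    destruct (cont_eps_inv _ x (HC x) (eps / 3) ltac:(lra)) as [d [Hd Hy]].
    exists d. split; auto. intros y Hyx. specialize (Hy y Hyx).
    pose proof (Ulim_close nN M L N x P). pose proof (Ulim_close nN M L N y P).
    replace (Ulim nN M L y - Ulim nN M L x) with
      ((Ulim nN M L y - Uit nN M L N y) + (Uit nN M L N y - Uit nN M L N x) - (Ulim nN M L x - Uit nN M L N x)) by ring.
    eapply Rle_lt_trans; [apply Rabs_triang|]. rewrite Rabs_Ropp.
    pose proof (Rabs_triang (Ulim nN M L y - Uit nN M L N y) (Uit nN M L N y - Uit nN M L N x)). lra.
  - intros x. apply lim_le with 4. intros n.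
    pose proof (Ulim_close nN M L n x P). destruct (Uit_good nN M L n P) as [_ HB]. specialize (HB x).
    replace (Ulim nN M L x) with ((Ulim nN M L x - Uit nN M L n x) + Uit nN M L n x) by ring.
    eapply Rle_trans; [apply Rabs_triang|]. lra.
Qed.

Lemma Ulim_fix nN M L x : Params nN M L -> Ulim nN M L x = T nN M L (Ulim nN M L) x.
Proof.
  intros P.
  assert (Rabs (Ulim nN M L x - T nN M L (Ulim nN M L) x) <= 0).
  { apply lim_le with 8. intros n.
    pose proof (Ulim_close nN M L (S n) x P).
    assert (Rabs (T nN M L (Uit nN M L n) x - T nN M L (Ulim nN M L) x) <= (4 * (1/2)^n) / 2).
    { apply (T_contr nN M L); try apply Uit_good; try apply Ulim_good; auto.
      intros y. rewrite Rabs_minus_sym. apply Ulim_close; auto. }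
    change (Uit nN M L (S n)) with (T nN M L (Uit nN M L n)) in H.
    replace (Ulim nN M L x - T nN M L (Ulim nN M L) x) with
      ((Ulim nN M L x - T nN M L (Uit nN M L n) x) + (T nN M L (Uit nN M L n) x - T nN M L (Ulim nN M L) x)) by ring.
    eapply Rle_trans; [apply Rabs_triang|]. simpl in H. pose proof (half_pow_pos n). lra. }
  pose proof (Rabs_pos (Ulim nN M L x - T nN M L (Ulim nN M L) x)).
  assert (Rabs (Ulim nN M L x - T nN M L (Ulim nN M L) x) = 0) by lra.
  apply Rabs_eq_0 in H1. lra.
Qed.


Definition gD nN M U t :=
  Fof nN M U t * / Ek 0 t - Phi nN M U t * (Ek 3 t / 2) * / Ek 0 t.

Lemma Phi_deriv nN M U t : Good U -> 0 < t -> is_derive (Phi nN M U) t (gD nN M U t).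
Proof.
  intros HU Ht. pose proof (E0_pos t Ht).
  pose proof (is_derive_mult (K:=R_AbsRing) (fun y => RInt (Fof nN M U) 0 y) (fun y => / Ek 0 y) t
     (Fof nN M U t) (- (Ek 3 t / 2) / Ek 0 t ^ 2)) as HD.
  assert (HD' := HD (RInt_deriv _ t (fun y => Fof_cont nN M U y HU))
     (is_derive_inv _ _ _ (E0_derive t) ltac:(lra)) (fun a b => Rmult_comm a b)).
  clear HD.
  replace (gD nN M U t) with (plus (mult (Fof nN M U t) ((fun y : R_AbsRing => / Ek 0 y) t))
       (mult ((fun y : R_AbsRing => RInt (Fof nN M U) 0 y) t)
          (- (Ek 3 t / 2) / Ek 0 t ^ 2))).
  - eapply is_derive_ext; [|exact HD']. intros; reflexivity.
  - unfold gD, Phi. cbn. unfold plus, mult; cbn. field. lra.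
Qed.

Lemma gD_cont nN M U t : Good U -> 0 < t -> 0 < t -> forall L, Params nN M L -> continuous (gD nN M U) t.
Proof.
  intros HU Ht _ L P. pose proof (E0_pos t Ht).
  assert (Ci : continuous (fun y => / Ek 0 y) t).
  { apply (continuous_comp (Ek 0) Rinv). apply Ek_cont; lia. apply continuous_Rinv; lra. }
  unfold gD.
  apply (continuous_minus (K:=R_AbsRing) (V:=R_NormedModule) (fun y => Fof nN M U y * / Ek 0 y)
     (fun y => Phi nN M U y * (Ek 3 y / 2) * / Ek 0 y)).
  - apply (continuous_mult (K:=R_AbsRing) (Fof nN M U)); auto. apply Fof_cont; auto.
  - apply (continuous_mult (K:=R_AbsRing) (fun y => Phi nN M U y * (Ek 3 y / 2))); auto.
    apply (continuous_mult (K:=R_AbsRing) (Phi nN M U)). apply (Phi_cont nN M L); auto; lra.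
    apply (continuous_mult (K:=R_AbsRing) (Ek 3) (fun _ => / 2)). apply Ek_cont; lia. apply continuous_const.
Qed.


Lemma loc_interval a b s : a < s < b -> locally s (fun t => a < t < b).
Proof.
  intros Hs. exists (mkposreal (Rmin (s - a) (b - s)) ltac:(apply Rmin_pos; lra)).
  intros t Ht. cbn in Ht. unfold ball in Ht; cbn in Ht.
  unfold AbsRing_ball, abs, minus, plus, opp in Ht; cbn in Ht.
  apply Rabs_lt_between in Ht. pose proof (Rmin_l (s - a) (b - s)). pose proof (Rmin_r (s - a) (b - s)). lra.
Qed.

Theorem theorem3p1 (N : nat) (HN : (3 <= N)%nat) :
  exists S : R -> Prop,
    (forall M, S M -> 0 < M) /\
    (forall a b, 0 < a -> a < b -> exists M, S M /\ a < M < b) /\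
    (forall M, S M ->
       exists (L : R) (V : R -> R),
         0 < L /\
         (* V in C([0,L]) *)
         (forall s, 0 <= s <= L ->
            filterlim V (within (fun x => 0 <= x <= L) (locally s)) (locally (V s))) /\
         (* V in C^2((0,L)) *)
         (forall s, 0 < s < L ->
            ex_derive V s /\ ex_derive (Derive V) s /\
            continuous (Derive (Derive V)) s) /\
         (* the equation on (0,L) *)
         (forall s, 0 < s < L ->
            ode_lhs N s (V s) (Derive V s) (Derive (Derive V) s) = 0) /\
         V 0 = M).
Proof.
  assert (HN3 : 3 <= INR N) by (replace 3 with (INR 3) by (simpl; ring); apply le_INR; auto).
  exists (fun M => 0 < M). split; [auto|]. split.
  { intros a b Ha Hab. exists ((a + b) / 2). split; lra. }
  intros M HM.
  set (nN := INR N) in *.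
  pose proof (consts_pos nN M HN3 HM) as (C1 & C2 & C3).
  assert (HC : 1 <= Cst nN M) by (unfold Cst; lra).
  set (L := Rmin 1 (1 / (4 * Cst nN M))).
  assert (P : Params nN M L).
  { unfold Params. split; auto. split; auto. split.
    { apply Rmin_pos; [lra|]. apply Rdiv_lt_0_compat; lra. }
    split. { apply Rmin_l. }
    pose proof (Rmin_r 1 (1 / (4 * Cst nN M))). fold L in H.
    apply Rmult_le_compat_l with (r := 4 * Cst nN M) in H; [|lra].
    replace (4 * Cst nN M * (1 / (4 * Cst nN M))) with 1 in H by (field; lra). lra. }
  pose proof P as (H1 & H2 & H3 & H4 & H5).
  set (U := Ulim nN M L).
  assert (HU : Good U) by (apply Ulim_good; auto).
  exists L, (Vof M U).
  assert (DV : forall t, Derive (Vof M U) t = U t).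
  { intros t. apply is_derive_unique. apply Vof_deriv. apply HU. }
  assert (PU : forall t, 0 < t < L -> Phi nN M U t = U t).
  { intros t Ht. unfold U. rewrite (Ulim_fix nN M L t P). unfold T. rewrite clamp_id by lra. reflexivity. }
  assert (DU : forall s, 0 < s < L -> is_derive U s (gD nN M U s)).
  { intros s Hs. apply (is_derive_ext_loc (Phi nN M U)).
    - generalize (loc_interval 0 L s Hs). apply filter_imp. intros t Ht. apply PU; auto.
    - apply Phi_deriv; auto. lra. }
  split; [lra|]. split.
  { intros s Hs. eapply filterlim_filter_le_1; [apply filter_le_within | apply Vof_cont; apply HU]. }
  split.
  { intros s Hs. split; [eexists; apply Vof_deriv; apply HU|]. split.
    - eexists. eapply is_derive_ext; [intros t; symmetry; apply DV| apply DU; auto].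
    - apply continuous_ext_loc with (gD nN M U).
      + generalize (loc_interval 0 L s Hs). apply filter_imp. intros t Ht.
        rewrite (Derive_ext _ _ _ DV). symmetry. apply is_derive_unique. apply DU; auto.
      + apply (gD_cont nN M U s HU ltac:(lra) ltac:(lra) L P). }
  split.
  { intros s Hs. rewrite DV. rewrite (Derive_ext _ _ _ DV). rewrite (is_derive_unique _ _ _ (DU s Hs)).
    unfold ode_lhs, gD, Fof, fN. rewrite (PU s Hs). fold nN.
    rewrite !Ek_pos by lra. pose proof (exp_pos (- / (4 * s ^ 2))).
    field. split; lra. }
  unfold Vof. rewrite RInt_point. cbn. unfold zero; cbn. ring.
Qed.
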